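(* For the system $$\dot x=-y+x(x^3+xy^2)+\sum_{k=1}^2\varepsilon^k\Big(\lambda_kx+\sum_{i+j=4}a_{k,i,j}x^iy^j\Big),\qquad \dot y=x+y(x^3+xy^2)+\sum_{k=1}^2\varepsilon^k\Big(\lambda_ky+\sum_{i+j=4}b_{k,i,j}x^iy^j\Big)$$ with real coefficients, the first order averaged function satisfies $f_1(z)\equiv0$ on $D=(0,3^{-1/3})$ if and only if $a_{1,1,3}=b_{1,0,4}$, $a_{1,3,1}=b_{1,2,2}$, and $b_{1,4,0}=\lambda_1=0$.
   Context: Averaging framework (first order): in polar coordinates $x=r\cos\theta,y=r\sin\theta$, write $dr/d\theta=F_0(\theta,r)+\varepsilon F_1(\theta,r)+O(\varepsilon^2)$. Here $F_0=r^4\cos\theta$, its solution with $r(0)=z$ is $r(\theta,z)=z(1-3z^3\sin\theta)^{-1/3}$, $2\pi$-periodic and positive for $z\in D=(0,3^{-1/3})$, and $Y(\theta,z)=(1-3z^3\sin\theta)^{-4/3}$ solves $Y'=\partial_rF_0(\theta,r(\theta,z))Y$, $Y(0,z)=1$. The first order averaged function is $f_1(z)=Y(2\pi,z)\int_0^{2\pi}Y(s,z)^{-1}F_1(s,r(s,z))\,ds$. *)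

(* Defs.v *)
From Stdlib Require Import Reals Lra.
From Coquelicot Require Import Coquelicot.
Open Scope R_scope.

Definition quartic (c : nat -> nat -> R) (x y : R) : R :=
  sum_f_R0 (fun i => c i (4 - i)%nat * x ^ i * y ^ (4 - i)) 4.

Definition xdot (lam : nat -> R) (a : nat -> nat -> nat -> R) (eps x y : R) : R :=
  - y + x * (x ^ 3 + x * y ^ 2)
  + eps * (lam 1%nat * x + quartic (a 1%nat) x y)
  + eps ^ 2 * (lam 2%nat * x + quartic (a 2%nat) x y).

Definition ydot (lam : nat -> R) (b : nat -> nat -> nat -> R) (eps x y : R) : R :=
  x + y * (x ^ 3 + x * y ^ 2)
  + eps * (lam 1%nat * y + quartic (b 1%nat) x y)
  + eps ^ 2 * (lam 2%nat * y + quartic (b 2%nat) x y).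

(* dr/dtheta in polar coordinates x = r cos th, y = r sin th:
   dr/dtheta = (dr/dt)/(dtheta/dt) with dr/dt = (x xdot + y ydot)/r and
   dtheta/dt = (x ydot - y xdot)/r^2. *)
Definition drdth (lam : nat -> R) (a b : nat -> nat -> nat -> R) (eps th r : R) : R :=
  let x := r * cos th in
  let y := r * sin th in
  let xd := xdot lam a eps x y in
  let yd := ydot lam b eps x y in
  ((x * xd + y * yd) / r) / ((x * yd - y * xd) / r ^ 2).

Definition F1 (lam : nat -> R) (a b : nat -> nat -> nat -> R) (th r : R) : R :=
  Derive (fun eps => drdth lam a b eps th r) 0.

(* Unperturbed solution r(theta, z) and fundamental solution Y(theta, z). *)
Definition rsol (th z : R) : R := z * Rpower (1 - 3 * z ^ 3 * sin th) (- (1 / 3)).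
Definition Ysol (th z : R) : R := Rpower (1 - 3 * z ^ 3 * sin th) (- (4 / 3)).

Definition f1 (lam : nat -> R) (a b : nat -> nat -> nat -> R) (z : R) : R :=
  Ysol (2 * PI) z *
  RInt (fun s => / Ysol s z * F1 lam a b s (rsol s z)) 0 (2 * PI).

(* Main.v *)
Require Import Defs.
From Stdlib Require Import Reals Lra Nsatz.
From Coquelicot Require Import Coquelicot.
Open Scope R_scope.
Ltac contR := apply (@ex_derive_continuous R_AbsRing R_NormedModule); auto_derive; auto.
Ltac req := match goal with |- ?x = ?y => change (@eq R x y) end.


Definition Gf (a b : nat -> nat -> nat -> R) c s :=
  c * (c * quartic (b 1%nat) c s - s * quartic (a 1%nat) c s).
Definition Q5 (a b : nat -> nat -> nat -> R) c s :=
  c * quartic (a 1%nat) c s + s * quartic (b 1%nat) c s.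
Definition hP (a b : nat -> nat -> nat -> R) t :=
  (b 1%nat 1%nat 3%nat - a 1%nat 2%nat 2%nat)*(1-t^2)*t^3
  + (b 1%nat 3%nat 1%nat - a 1%nat 4%nat 0%nat)*(1-t^2)^2*t - a 1%nat 0%nat 4%nat * t^5.
Definition PP (a b : nat -> nat -> nat -> R) t :=
  (b 1%nat 0%nat 4%nat - a 1%nat 1%nat 3%nat)*(1-t^2)*t^4
  + (b 1%nat 2%nat 2%nat - a 1%nat 3%nat 1%nat)*(1-t^2)^2*t^2 + b 1%nat 4%nat 0%nat*(1-t^2)^3.
Definition h1 (a b : nat -> nat -> nat -> R) t :=
  (a 1%nat 0%nat 4%nat + b 1%nat 1%nat 3%nat)*t^4
  + (a 1%nat 2%nat 2%nat + b 1%nat 3%nat 1%nat)*(1-t^2)*t^2 + a 1%nat 4%nat 0%nat*(1-t^2)^2.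
Definition h2 (a b : nat -> nat -> nat -> R) t :=
  (a 1%nat 1%nat 3%nat + b 1%nat 2%nat 2%nat)*t^2*(1-t^2)
  + (a 1%nat 3%nat 1%nat + b 1%nat 4%nat 0%nat)*t^4 + b 1%nat 0%nat 4%nat*(1-t^2)^2.


Lemma cs1 x : cos x ^ 2 + sin x ^ 2 = 1.
Proof. rewrite <- (sin2_cos2 x); unfold Rsqr; ring. Qed.

Lemma G_dec a b x : Gf a b (cos x) (sin x) = cos x * hP a b (sin x) + PP a b (sin x).
Proof.
generalize (cs1 x). generalize (cos x) (sin x). intros c s H.
unfold Gf, hP, PP, quartic. cbn [sum_f_R0 Nat.sub].
generalize (a 1%nat 0%nat 4%nat) (a 1%nat 1%nat 3%nat) (a 1%nat 2%nat 2%nat) (a 1%nat 3%nat 1%nat) (a 1%nat 4%nat 0%nat).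
generalize (b 1%nat 0%nat 4%nat) (b 1%nat 1%nat 3%nat) (b 1%nat 2%nat 2%nat) (b 1%nat 3%nat 1%nat) (b 1%nat 4%nat 0%nat).
intros. cbn [pow] in *. nsatz.
Qed.

Lemma Q5_dec a b x : Q5 a b (cos x) (sin x) = cos x * h1 a b (sin x) + sin x * h2 a b (cos x).
Proof.
generalize (cs1 x). generalize (cos x) (sin x). intros c s H.
unfold Q5, h1, h2, quartic. cbn [sum_f_R0 Nat.sub].
generalize (a 1%nat 0%nat 4%nat) (a 1%nat 1%nat 3%nat) (a 1%nat 2%nat 2%nat) (a 1%nat 3%nat 1%nat) (a 1%nat 4%nat 0%nat).
generalize (b 1%nat 0%nat 4%nat) (b 1%nat 1%nat 3%nat) (b 1%nat 2%nat 2%nat) (b 1%nat 3%nat 1%nat) (b 1%nat 4%nat 0%nat).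
intros. cbn [pow] in *. nsatz.
Qed.

Lemma L_cos (phi : R -> R) : (forall t, -1 <= t <= 1 -> continuous phi t) ->
  is_RInt (fun x => cos x * phi (sin x)) 0 (2*PI) 0.
Proof.
intros Hc.
assert (H := is_RInt_comp phi sin cos 0 (2*PI)).
rewrite sin_0, sin_2PI, RInt_point in H.
apply H.
- intros x _. apply Hc. apply SIN_bound.
- intros x _. split; [apply is_derive_sin | apply continuous_cos].
Qed.

Lemma L_sin (phi : R -> R) : (forall t, -1 <= t <= 1 -> continuous phi t) ->
  is_RInt (fun x => sin x * phi (cos x)) 0 (2*PI) 0.
Proof.
intros Hc.
assert (H := is_RInt_comp phi cos (fun x => - sin x) 0 (2*PI)).
rewrite cos_0, cos_2PI, RInt_point in H.
assert (H1 : is_RInt (fun y => scal (- sin y) (phi (cos y))) 0 (2*PI) zero).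
{ apply H.
- intros x _. apply Hc. apply COS_bound.
- intros x _. split; [apply is_derive_cos | contR]. }
apply is_RInt_opp in H1. unfold opp, zero in H1; simpl in H1; rewrite Ropp_0 in H1.
eapply is_RInt_ext; [|exact H1].
intros x _. unfold opp, scal; simpl; unfold mult; simpl. ring.
Qed.

Lemma quartic_hom c r x y : quartic c (r*x) (r*y) = r^4 * quartic c x y.
Proof. unfold quartic; cbn [sum_f_R0 Nat.sub]. ring. Qed.

Ltac fixden r th := match goal with |- context[ ?X * / (r*(r*1)) ] =>
  let H := fresh in assert (H : X * / (r*(r*1)) = 1) by
   (transitivity (Rsqr (sin th) + Rsqr (cos th)); [unfold Rsqr; field; auto | apply sin2_cos2]);
  rewrite H end.

Lemma F1_eq lam a b th r : r <> 0 ->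
  F1 lam a b th r = lam 1%nat * r + r^4 * Q5 a b (cos th) (sin th) - r^7 * Gf a b (cos th) (sin th).
Proof.
intro Hr. unfold F1, Q5, Gf. apply is_derive_unique.
unfold drdth, xdot, ydot.
auto_derive.
all: rewrite ?quartic_hom.
all: fixden r th.
- lra.
- assert (HCS : cos th ^ 2 + sin th ^ 2 = 1) by (rewrite <- (sin2_cos2 th); unfold Rsqr; ring).
  clear H. generalize dependent (cos th); intros c HCS; generalize dependent (sin th); intros s HCS.
  field_simplify_eq; [idtac | auto].
  apply Rminus_diag_uniq.
  transitivity ((c^2+s^2-1)*( - quartic (b 1%nat) c s * r^10 * c^2 * (c^2+s^2+1) + quartic (a 1%nat) c s * r^10 * c * s * (c^2+s^2+1) + r^4 * lam 1%nat)); [ring | rewrite HCS; ring].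
Qed.

Lemma integrand lam a b z s : 0 < z -> 0 < 1 - 3*z^3*sin s ->
  / Ysol s z * F1 lam a b s (rsol s z) = lam 1%nat * z * (1 - 3*z^3*sin s)
   + z^4 * Q5 a b (cos s) (sin s) - z^7 * (Gf a b (cos s) (sin s) / (1 - 3*z^3*sin s)).
Proof.
intros Hz Hu.
assert (HU : 0 < Rpower (1 - 3*z^3*sin s) (-(1/3))) by (unfold Rpower; apply exp_pos).
assert (HY : Ysol s z = (Rpower (1 - 3*z^3*sin s) (-(1/3)))^4).
{ unfold Ysol. rewrite <- (Rpower_pow 4 _ HU). rewrite Rpower_mult.
  f_equal. replace (INR 4) with 4 by (simpl; ring). field. }
assert (HU3 : (Rpower (1 - 3*z^3*sin s) (-(1/3)))^3 = / (1 - 3*z^3*sin s)).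
{ rewrite <- (Rpower_pow 3 _ HU). rewrite Rpower_mult.
  replace (-(1/3) * INR 3) with (Ropp 1) by (simpl; field).
  rewrite Rpower_Ropp, Rpower_1 by exact Hu. reflexivity. }
unfold rsol. rewrite HY.
generalize dependent (Rpower (1 - 3 * z ^ 3 * sin s) (- (1 / 3))). intros U HU HY HU3.
rewrite F1_eq by (apply Rmult_integral_contrapositive; split; lra).
assert (Hu' : 1 - 3*z^3*sin s = / U^3) by (rewrite HU3, Rinv_inv; reflexivity).
rewrite Hu'. field. lra.
Qed.


Lemma RI_plus (f g : R -> R) a b If Ig : is_RInt f a b If -> is_RInt g a b Ig ->
  is_RInt (fun x => f x + g x) a b (If + Ig).
Proof. intros. apply (is_RInt_plus f g); auto. Qed.
Lemma RI_minus (f g : R -> R) a b If Ig : is_RInt f a b If -> is_RInt g a b Ig ->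
  is_RInt (fun x => f x - g x) a b (If - Ig).
Proof. intros. apply (is_RInt_minus f g); auto. Qed.
Lemma RI_scal (f : R -> R) a b k If : is_RInt f a b If ->
  is_RInt (fun x => k * f x) a b (k * If).
Proof. intros. apply (is_RInt_scal f); auto. Qed.
Lemma RI_const a b (v : R) : is_RInt (fun _ => v) a b ((b - a) * v).
Proof. apply (is_RInt_const a b v). Qed.
Lemma RI_ext (f g : R -> R) a b l l' : (forall x, f x = g x) -> l = l' ->
  is_RInt f a b l -> is_RInt g a b l'.
Proof. intros H E H1. subst l'. apply (is_RInt_ext f); auto. Qed.

Lemma RInt_ext' (f g : R -> R) a b : (forall x, Rmin a b < x < Rmax a b -> f x = g x) ->
  RInt f a b = RInt g a b.
Proof. apply RInt_ext. Qed.

Lemma u_pos z s : 0 <= z -> 3*z^3 < 1 -> 0 < 1 - 3*z^3*sin s.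
Proof. intros Hz Hk. destruct (SIN_bound s). assert (0 <= z^3) by (apply pow_le; lra). nra. Qed.

Lemma I_sin : is_RInt sin 0 (2*PI) 0.
Proof.
eapply RI_ext; [| | apply (L_sin (fun _ => 1))].
- intros; simpl; ring.
- reflexivity.
- intros; apply continuous_const.
Qed.

Lemma I_Q5 a b : is_RInt (fun s => Q5 a b (cos s) (sin s)) 0 (2*PI) 0.
Proof.
eapply RI_ext.
3: { apply RI_plus; [apply (L_cos (h1 a b)) | apply (L_sin (h2 a b))];
     intros; unfold h1, h2; contR. }
- intros x. rewrite Q5_dec. reflexivity.
- lra.
Qed.

Lemma ex_Gu a b z : 0 <= z -> 3*z^3 < 1 -> forall n,
  ex_RInt (fun s => Gf a b (cos s) (sin s) * sin s ^ n / (1 - 3*z^3*sin s)) 0 (2*PI).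
Proof.
intros Hz Hk n. apply (@ex_RInt_continuous R_CompleteNormedModule). intros x _.
unfold Gf, quartic; cbn [sum_f_R0 Nat.sub]. contR.
apply Rgt_not_eq. apply u_pos; auto.
Qed.

Definition T a b n k := RInt (fun s => Gf a b (cos s) (sin s) * sin s ^ n / (1 - k*sin s)) 0 (2*PI).

Lemma f1_eq lam a b z : 0 < z -> 3*z^3 < 1 ->
  f1 lam a b z = 2*PI*lam 1%nat*z - z^7 * T a b 0 (3*z^3).
Proof.
intros Hz Hk. unfold f1.
replace (Ysol (2*PI) z) with 1.
2: { unfold Ysol. rewrite sin_2PI. replace (1-3*z^3*0) with 1 by ring.
     unfold Rpower. rewrite ln_1, Rmult_0_r, exp_0. reflexivity. }
rewrite Rmult_1_l.
rewrite (RInt_ext' _ (fun s => lam 1%nat * z * (1 - 3*z^3*sin s)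
   + z^4 * Q5 a b (cos s) (sin s) - z^7 * (Gf a b (cos s) (sin s) * sin s ^ 0 / (1 - 3*z^3*sin s)))).
2: { intros x _. assert (Hu := u_pos z x (Rlt_le _ _ Hz) Hk). rewrite (integrand lam a b z x Hz Hu). rewrite pow_O. field.
     lra. }
apply is_RInt_unique.
assert (I1 : is_RInt (fun s => lam 1%nat * z * (1 - 3*z^3*sin s)) 0 (2*PI) (2*PI*lam 1%nat*z)).
{ eapply RI_ext; [| | apply RI_scal, RI_minus; [apply RI_const | apply RI_scal, I_sin]].
  - intros x; simpl. reflexivity.
  - req; ring. }
eapply RI_ext; [| | apply RI_minus; [apply RI_plus; [exact I1 | apply RI_scal, I_Q5] |
   apply RI_scal, (@RInt_correct R_CompleteNormedModule), ex_Gu]].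
- intros; reflexivity.
- unfold T. req; ring.
- lra.
- exact Hk.
Qed.

Lemma exR (f : R -> R) a b : (forall x, continuous f x) -> ex_RInt f a b.
Proof. intros H. apply (@ex_RInt_continuous R_CompleteNormedModule). intros; apply H. Qed.

Lemma Chasles' (f : R -> R) a b c : (forall x, continuous f x) ->
  RInt f a b + RInt f b c = RInt f a c.
Proof. intros H. apply (@RInt_Chasles R_CompleteNormedModule); apply exR; auto. Qed.

Lemma int0_pos (f : R -> R) a b x0 : (forall x, continuous f x) -> (forall x, 0 <= f x) ->
  is_RInt f a b 0 -> a < x0 < b -> f x0 = 0.
Proof.
intros Hc Hp HI Hx.
destruct (Rle_lt_or_eq_dec 0 (f x0) (Hp x0)) as [Hlt|]; [|auto].
exfalso.
assert (Hf : forall eps : posreal, locally x0 (fun x => ball (f x0) eps (f x))) by (apply (filterlim_locally (F := locally x0)); apply Hc).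
specialize (Hf (mkposreal _ (Rmult_lt_0_compat _ _ Hlt (Rinv_0_lt_compat 2 Rlt_0_2)))).
destruct Hf as [d Hd]. simpl in Hd.
set (e := Rmin (d/2) (Rmin ((x0-a)/2) ((b-x0)/2))).
assert (He : 0 < e) by (unfold e; destruct d; simpl; repeat apply Rmin_pos; lra).
assert (He1 : e <= d/2) by apply Rmin_l.
assert (He2 : e <= (x0-a)/2) by (unfold e; eapply Rle_trans; [apply Rmin_r|apply Rmin_l]).
assert (He3 : e <= (b-x0)/2) by (unfold e; eapply Rle_trans; [apply Rmin_r|apply Rmin_r]).
apply (@is_RInt_unique R_CompleteNormedModule) in HI.
rewrite <- (Chasles' f a (x0-e) b Hc), <- (Chasles' f (x0-e) (x0+e) b Hc) in HI.
assert (H1 : 0 <= RInt f a (x0-e)) by (apply RInt_ge_0; [lra | apply exR; auto | intros; apply Hp]).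
assert (H3 : 0 <= RInt f (x0+e) b) by (apply RInt_ge_0; [lra | apply exR; auto | intros; apply Hp]).
assert (H2 : 0 < RInt f (x0-e) (x0+e)).
{ apply RInt_gt_0; [lra | | intros; apply Hc].
  intros x Hx'. assert (B : ball x0 d x).
  { unfold ball; simpl; unfold AbsRing_ball, abs, minus, plus, opp; simpl.
    apply Rabs_def1; lra. }
  specialize (Hd x B). unfold ball in Hd; simpl in Hd; unfold AbsRing_ball, abs, minus, plus, opp in Hd; simpl in Hd.
  apply Rabs_def2 in Hd. lra. }
lra.
Qed.

Definition KQ (q : nat -> nat -> R) :=
  Rabs (q 0%nat 4%nat) + Rabs (q 1%nat 3%nat) + Rabs (q 2%nat 2%nat) + Rabs (q 3%nat 1%nat) + Rabs (q 4%nat 0%nat).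

Lemma pow_abs_le1 x n : Rabs x <= 1 -> Rabs (x ^ n) <= 1.
Proof.
intros H. rewrite <- RPow_abs. induction n; simpl; [lra|].
assert (0 <= Rabs x) by apply Rabs_pos.
assert (0 <= Rabs x ^ n) by (apply pow_le; auto). nra.
Qed.

Lemma term_bd q c s i j : Rabs c <= 1 -> Rabs s <= 1 -> Rabs (q * c ^ i * s ^ j) <= Rabs q.
Proof.
intros. rewrite !Rabs_mult.
assert (A1 := pow_abs_le1 c i H). assert (A2 := pow_abs_le1 s j H0).
assert (0 <= Rabs q) by apply Rabs_pos.
assert (0 <= Rabs (c^i)) by apply Rabs_pos.
assert (0 <= Rabs (s^j)) by apply Rabs_pos.
assert (Rabs (c^i) * Rabs (s^j) <= 1) by nra.
rewrite Rmult_assoc. rewrite <- (Rmult_1_r (Rabs q)) at 2. apply Rmult_le_compat_l; auto.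
Qed.

Lemma quartic_bd q c s : Rabs c <= 1 -> Rabs s <= 1 -> Rabs (quartic q c s) <= KQ q.
Proof.
intros. unfold quartic, KQ. cbn [sum_f_R0 Nat.sub].
repeat (eapply Rle_trans; [apply Rabs_triang | apply Rplus_le_compat; [ | apply term_bd; auto ]]).
apply term_bd; auto.
Qed.

Definition KG a b := KQ (a 1%nat) + KQ (b 1%nat).

Lemma KQ_pos q : 0 <= KQ q.
Proof. unfold KQ. repeat apply Rplus_le_le_0_compat; apply Rabs_pos. Qed.

Lemma G_bd a b x : Rabs (Gf a b (cos x) (sin x)) <= KG a b.
Proof.
assert (Hc : Rabs (cos x) <= 1) by (apply Rabs_le; apply COS_bound).
assert (Hs : Rabs (sin x) <= 1) by (apply Rabs_le; apply SIN_bound).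
assert (HA := quartic_bd (a 1%nat) _ _ Hc Hs).
assert (HB := quartic_bd (b 1%nat) _ _ Hc Hs).
unfold Gf, KG. rewrite Rabs_mult.
assert (0 <= Rabs (cos x)) by apply Rabs_pos.
assert (Rabs (cos x * quartic (b 1%nat) (cos x) (sin x) - sin x * quartic (a 1%nat) (cos x) (sin x)) <= KQ (b 1%nat) + KQ (a 1%nat)).
{ unfold Rminus. eapply Rle_trans; [apply Rabs_triang|]. rewrite Rabs_Ropp, !Rabs_mult.
  assert (0 <= Rabs (sin x)) by apply Rabs_pos.
  assert (0 <= Rabs (quartic (a 1%nat) (cos x) (sin x))) by apply Rabs_pos.
  assert (0 <= Rabs (quartic (b 1%nat) (cos x) (sin x))) by apply Rabs_pos.
  nra. }
assert (0 <= Rabs (cos x * quartic (b 1%nat) (cos x) (sin x) - sin x * quartic (a 1%nat) (cos x) (sin x))) by apply Rabs_pos.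
nra.
Qed.

Lemma T_bd a b n z : 0 <= z -> 3*z^3 <= 1/2 ->
  Rabs (T a b n (3*z^3)) <= (2*PI - 0) * (2 * KG a b).
Proof.
intros Hz Hk. unfold T. apply abs_RInt_le_const.
- assert (PI > 0) by apply PI_RGT_0. lra.
- apply ex_Gu; lra.
- intros t _. assert (Hu := u_pos z t Hz ltac:(lra)).
  destruct (SIN_bound t). assert (0 <= z^3) by (apply pow_le; lra).
  assert (Hu2 : 1/2 <= 1 - 3*z^3*sin t) by nra.
  unfold Rdiv. rewrite !Rabs_mult, Rabs_inv, (Rabs_pos_eq (1 - 3*z^3*sin t)) by lra.
  assert (HG := G_bd a b t).
  assert (Hs : Rabs (sin t ^ n) <= 1) by (apply pow_abs_le1; apply Rabs_le; lra).
  assert (0 <= Rabs (Gf a b (cos t) (sin t))) by apply Rabs_pos.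
  assert (0 <= Rabs (sin t ^ n)) by apply Rabs_pos.
  assert (0 < / (1 - 3*z^3*sin t) <= 2).
  { split. apply Rinv_0_lt_compat; lra.
    replace 2 with (/ (1/2)) by field. apply Rinv_le_contravar; lra. }
  assert (Rabs (Gf a b (cos t) (sin t)) * Rabs (sin t ^ n) <= KG a b) by nra.
  nra.
Qed.

Definition mm a b n := RInt (fun s => Gf a b (cos s) (sin s) * sin s ^ n) 0 (2*PI).

Lemma contG a b n x : continuous (fun s => Gf a b (cos s) (sin s) * sin s ^ n) x.
Proof. unfold Gf, quartic; cbn [sum_f_R0 Nat.sub]. contR. Qed.

Lemma T_rec a b n z : 0 <= z -> 3*z^3 < 1 ->
  T a b n (3*z^3) = mm a b n + 3*z^3 * T a b (S n) (3*z^3).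
Proof.
intros Hz Hk. unfold T at 1. apply is_RInt_unique.
eapply RI_ext; [| | apply RI_plus; [apply (@RInt_correct R_CompleteNormedModule), (exR (fun s => Gf a b (cos s) (sin s) * sin s ^ n) 0 (2*PI) (contG a b n)) |
   apply (RI_scal (fun s => Gf a b (cos s) (sin s) * sin s ^ (S n) / (1 - 3*z^3*sin s)) 0 (2*PI) (3*z^3)), (@RInt_correct R_CompleteNormedModule), (ex_Gu a b z Hz Hk (S n))]].
- intros x. cbv beta. change (sin x ^ S n) with (sin x * sin x ^ n). assert (Hu := u_pos z x Hz Hk). field. lra.
- reflexivity.
Qed.

Lemma small c M d : 0 < d -> (forall z, 0 < z < d -> Rabs c <= z * M) -> c = 0.
Proof.
intros Hd H. destruct (Req_dec c 0) as [|Hc]; auto. exfalso.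
assert (Hc' : 0 < Rabs c) by (apply Rabs_pos_lt; auto).
assert (HM : 0 <= Rabs M) by apply Rabs_pos.
set (z := Rmin (d/2) (Rabs c / (2*(Rabs M + 1)))).
assert (Hz1 : 0 < z) by (unfold z; apply Rmin_pos; [lra | apply Rdiv_lt_0_compat; lra]).
assert (Hz2 : z <= d/2) by apply Rmin_l.
assert (Hz3 : z <= Rabs c / (2*(Rabs M + 1))) by apply Rmin_r.
specialize (H z ltac:(lra)).
assert (z * M <= z * Rabs M) by (apply Rmult_le_compat_l; [lra | apply Rle_abs]).
assert (z * (Rabs M + 1) <= Rabs c / 2).
{ replace (Rabs c / 2) with (Rabs c / (2*(Rabs M + 1)) * (Rabs M + 1)) by (field; lra).
  apply Rmult_le_compat_r; lra. }
nra.
Qed.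

Definition al (a b : nat -> nat -> nat -> R) := b 1%nat 0%nat 4%nat - a 1%nat 1%nat 3%nat.
Definition be (a b : nat -> nat -> nat -> R) := b 1%nat 2%nat 2%nat - a 1%nat 3%nat 1%nat.
Definition ga (b : nat -> nat -> nat -> R) := b 1%nat 4%nat 0%nat.

Lemma PP_exp a b t : PP a b t = ga b + (be a b - 3 * ga b) * t^2 + (al a b - 2 * be a b + 3 * ga b) * t^4
  + (- al a b + be a b - ga b) * t^6.
Proof. unfold PP, al, be, ga. ring. Qed.

Lemma PP_w a b t : PP a b t = ga b + (be a b - 3 * ga b) * t^2 + (al a b - 2 * be a b + 3 * ga b) * (t^2)^2
  + (- al a b + be a b - ga b) * (t^2)^3.
Proof. rewrite PP_exp. ring. Qed.

Lemma cube_lt z : 0 < z -> z < Rpower 3 (-(1/3)) -> 3*z^3 < 1.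
Proof.
intros Hz Hzw.
assert (Hw : 0 < Rpower 3 (-(1/3))) by (unfold Rpower; apply exp_pos).
assert (Hw3 : Rpower 3 (-(1/3)) ^ 3 = /3).
{ rewrite <- (Rpower_pow 3 _ Hw). rewrite Rpower_mult.
  replace (-(1/3) * INR 3) with (Ropp 1) by (simpl; field).
  rewrite Rpower_Ropp, Rpower_1 by lra. reflexivity. }
generalize dependent (Rpower 3 (-(1/3))). intros w Hzw Hw Hw3.
assert (E : w^3 - z^3 = (w - z) * (w^2 + w*z + z^2)) by ring.
assert (0 < w^2 + w*z + z^2) by nra.
assert (0 < w^3 - z^3) by (rewrite E; apply Rmult_lt_0_compat; lra).
rewrite Hw3 in *. lra.
Qed.

Lemma z6_le z : 0 < z < 1 -> z^6 <= z.
Proof.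
intros. assert (0 <= z^5) by (apply pow_le; lra).
assert (z^5 <= 1) by (rewrite <- (pow1 5); apply pow_incr; lra).
replace (z^6) with (z*z^5) by ring. nra.
Qed.

Lemma z3_le z : 0 < z < 1 -> z^3 <= z.
Proof.
intros. assert (0 <= z^2) by (apply pow_le; lra).
assert (z^2 <= 1) by (rewrite <- (pow1 2); apply pow_incr; lra).
replace (z^3) with (z*z^2) by ring. nra.
Qed.

Lemma forward lam a b :
  (forall z : R, 0 < z < Rpower 3 (- (1 / 3)) -> f1 lam a b z = 0) ->
  lam 1%nat = 0 /\ al a b = 0 /\ be a b = 0 /\ ga b = 0.
Proof.
intros Hf.
assert (Hw : 0 < Rpower 3 (-(1/3))) by (unfold Rpower; apply exp_pos).
set (d := Rmin (Rpower 3 (-(1/3))) (1/2)).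
assert (Hd : 0 < d) by (apply Rmin_pos; lra).
assert (Hzd : forall z, 0 < z < d -> 3*z^3 <= 1/2 /\ z < Rpower 3 (-(1/3)) /\ z < 1).
{ intros z Hz. assert (d <= Rpower 3 (-(1/3))) by apply Rmin_l. assert (d <= 1/2) by apply Rmin_r.
  assert (Hz3 := z3_le z ltac:(lra)).
  assert (z^3 <= z^2 * (1/2)) by (replace (z^3) with (z^2*z) by ring; apply Rmult_le_compat_l; [apply pow_le|]; lra).
  assert (z^2 <= 1/4) by (replace (1/4) with ((1/2)^2) by field; apply pow_incr; lra).
  repeat split; lra. }
assert (Heq : forall z, 0 < z < d -> 2*PI*lam 1%nat*z - z^7 * T a b 0 (3*z^3) = 0).
{ intros z Hz. destruct (Hzd z Hz) as [H1 [H2 H3]].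
  rewrite <- f1_eq by lra. apply Hf. lra. }
assert (HPI : 0 < PI) by apply PI_RGT_0.
assert (HKG : 0 <= KG a b) by (unfold KG; generalize (KQ_pos (a 1%nat)) (KQ_pos (b 1%nat)); lra).
assert (Hlam : lam 1%nat = 0).
{ assert (2*PI*lam 1%nat = 0).
  { apply (small _ ((2*PI - 0) * (2*KG a b)) d Hd).
    intros z Hz'. specialize (Heq z Hz'). destruct (Hzd z Hz') as [H1 [H2 H3]].
    assert (E : 2*PI*lam 1%nat = z^6 * T a b 0 (3*z^3)).
    { apply Rmult_eq_reg_r with z; [|lra]. replace (z^6 * T a b 0 (3*z^3) * z) with (z^7 * T a b 0 (3*z^3)) by ring. lra. }
    rewrite E, Rabs_mult, (Rabs_pos_eq (z^6)) by (apply pow_le; lra).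
    assert (HT := T_bd a b 0 z ltac:(lra) H1).
    assert (Hz6 := z6_le z ltac:(lra)).
    assert (0 <= z^6) by (apply pow_le; lra).
    assert (0 <= Rabs (T a b 0 (3 * z ^ 3))) by apply Rabs_pos.
    assert (0 <= (2*PI - 0) * (2*KG a b)) by nra.
    nra. }
  nra. }
assert (HT0 : forall z, 0 < z < d -> T a b 0 (3*z^3) = 0).
{ intros z Hz. specialize (Heq z Hz). rewrite Hlam in Heq.
  assert (z^7 <> 0) by (apply pow_nonzero; lra).
  assert (z^7 * T a b 0 (3*z^3) = 0) by lra.
  apply Rmult_integral in H0. destruct H0; [contradiction|auto]. }
assert (HTn : forall n, forall z, 0 < z < d -> T a b n (3*z^3) = 0).
{ induction n as [|n IH]; [exact HT0|].
  assert (Hm : mm a b n = 0).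
  { apply (small _ (3 * ((2*PI - 0) * (2*KG a b))) d Hd).
    intros z Hz. destruct (Hzd z Hz) as [H1 [H2 H3]].
    assert (R := T_rec a b n z ltac:(lra) ltac:(lra)). rewrite IH in R by auto.
    assert (E : mm a b n = - (3*z^3) * T a b (S n) (3*z^3)) by lra.
    rewrite E, Rabs_mult, Rabs_Ropp, (Rabs_pos_eq (3*z^3)) by (assert (0 <= z^3) by (apply pow_le; lra); lra).
    assert (HT := T_bd a b (S n) z ltac:(lra) H1).
    assert (Hz3 := z3_le z ltac:(lra)).
    assert (0 <= z^3) by (apply pow_le; lra).
    assert (0 <= Rabs (T a b (S n) (3 * z ^ 3))) by apply Rabs_pos.
    assert (0 <= (2*PI - 0) * (2*KG a b)) by nra.
    nra. }
  intros z Hz. destruct (Hzd z Hz) as [H1 [H2 H3]].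
  assert (R := T_rec a b n z ltac:(lra) ltac:(lra)). rewrite IH, Hm in R by auto.
  assert (0 < z^3) by (apply pow_lt; lra).
  assert (3*z^3 * T a b (S n) (3*z^3) = 0) by lra.
  apply Rmult_integral in H0. destruct H0; [lra|auto]. }
assert (Hm : forall n, mm a b n = 0).
{ intros n. assert (Hz : 0 < d/2 < d) by lra. destruct (Hzd _ Hz) as [H1 [H2 H3]].
  assert (R := T_rec a b n (d/2) ltac:(lra) ltac:(lra)).
  rewrite (HTn n _ Hz), (HTn (S n) _ Hz) in R. lra. }
assert (Hmi : forall n, is_RInt (fun s => Gf a b (cos s) (sin s) * sin s ^ n) 0 (2*PI) 0).
{ intros n. assert (H : is_RInt (fun s => Gf a b (cos s) (sin s) * sin s ^ n) 0 (2*PI) (mm a b n)).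
  { unfold mm. apply (@RInt_correct R_CompleteNormedModule). apply exR. apply contG. }
  rewrite Hm in H. exact H. }
assert (IGP : is_RInt (fun s => Gf a b (cos s) (sin s) * PP a b (sin s)) 0 (2*PI) 0).
{ pose proof (RI_plus _ _ _ _ _ _ (RI_plus _ _ _ _ _ _ (RI_plus _ _ _ _ _ _
     (RI_scal _ _ _ (ga b) _ (Hmi 0%nat)) (RI_scal _ _ _ (be a b - 3 * ga b) _ (Hmi 2%nat)))
     (RI_scal _ _ _ (al a b - 2 * be a b + 3 * ga b) _ (Hmi 4%nat)))
     (RI_scal _ _ _ (- al a b + be a b - ga b) _ (Hmi 6%nat))) as H.
  eapply RI_ext; [| | exact H].
  - intros x. cbv beta. rewrite PP_exp. ring.
  - req; ring. }
assert (ICP : is_RInt (fun s => cos s * (hP a b (sin s) * PP a b (sin s))) 0 (2*PI) 0).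
{ apply (L_cos (fun t => hP a b t * PP a b t)). intros. unfold hP, PP. contR. }
assert (IPP : is_RInt (fun s => PP a b (sin s) ^ 2) 0 (2*PI) 0).
{ eapply RI_ext; [| | exact (RI_minus _ _ _ _ _ _ IGP ICP)].
  - intros x. cbv beta. rewrite G_dec. ring.
  - req; ring. }
assert (Hzero : forall x0, 0 < x0 < 2*PI -> PP a b (sin x0) = 0).
{ intros x0 Hx0.
  assert (E := int0_pos (fun s => PP a b (sin s) ^ 2) 0 (2*PI) x0).
  cbv beta in E. assert (PP a b (sin x0) ^ 2 = 0).
  { apply E; auto.
    - intros x. unfold PP. contR.
    - intros x. apply pow2_ge_0. }
  nra. }
assert (Hg : ga b = 0).
{ assert (E := Hzero PI ltac:(lra)). rewrite sin_PI, PP_exp in E. lra. }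
assert (E6 := Hzero (PI/6) ltac:(lra)). rewrite sin_PI6, PP_w in E6.
assert (E3 := Hzero (PI/3) ltac:(lra)). rewrite sin_PI3, PP_w in E3.
assert (S3 : sqrt 3 * sqrt 3 = 3) by (apply sqrt_sqrt; lra).
replace ((sqrt 3 / 2)^2) with (3/4) in E3 by (simpl; rewrite Rmult_1_r; replace (sqrt 3 / 2 * (sqrt 3 / 2)) with (sqrt 3 * sqrt 3 / 4) by field; rewrite S3; field).
replace ((1/2)^2) with (1/4) in E6 by field.
rewrite Hg in E6, E3.
repeat split; auto; lra.
Qed.

Theorem mainTheorem8 (lam : nat -> R) (a b : nat -> nat -> nat -> R) :
  (forall z : R, 0 < z < Rpower 3 (- (1 / 3)) -> f1 lam a b z = 0) <->
  (a 1%nat 1%nat 3%nat = b 1%nat 0%nat 4%nat /\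
   a 1%nat 3%nat 1%nat = b 1%nat 2%nat 2%nat /\
   b 1%nat 4%nat 0%nat = 0 /\ lam 1%nat = 0).
Proof.
split.
- intros Hf. destruct (forward lam a b Hf) as [H1 [H2 [H3 H4]]].
  unfold al, be, ga in *. repeat split; lra.
- intros [H1 [H2 [H3 H4]]] z Hz.
  assert (Hk := cube_lt z (proj1 Hz) (proj2 Hz)).
  assert (Hz3 : 0 <= z^3) by (apply pow_le; lra).
  rewrite f1_eq by lra. rewrite H4. unfold T.
  rewrite (RInt_ext' _ (fun s => cos s * (hP a b (sin s) / (1 - 3*z^3*sin s)))).
  + assert (Hc : forall t, -1 <= t <= 1 -> continuous (fun t => hP a b t / (1 - 3*z^3*t)) t).
    { intros t Ht. unfold hP. contR. nra. }
    rewrite (is_RInt_unique _ _ _ _ (L_cos (fun t => hP a b t / (1 - 3*z^3*t)) Hc)). ring.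
  + intros x _. rewrite G_dec.
    replace (PP a b (sin x)) with 0 by (unfold PP; rewrite H1, H2, H3; ring).
    assert (Hu := u_pos z x (Rlt_le _ _ (proj1 Hz)) Hk).
    rewrite pow_O. field. lra.
Qed.
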